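(* Let $G=(N,E,W)$ be a finite undirected graph with positive edge weights $W=\{w_e : e\in E\}$, let $x,y\in N$ with $xy\notin E$, and let $G^*=(N,E^*,W^* )$ with $E^*=E\cup\{xy\}$ and $W^*=W\cup\{w_{x,y}\}$ for some weight $w_{x,y}>0$. Let $d$ and $d^*$ be the hop distances of $G$ and $G^*$, let $\mu_a,\mu^*_a$ be the neighbor measures and $k,k^*$ the Ollivier-Ricci curvatures of $G$ and $G^*$ (defined in the context). Then for any nodes $a\neq b$ in $N$, $$k^*(a,b)-k(a,b)\le \frac{W_1^{d}(\mu_a,\mu_b)-W_1^{d^*}(\mu^*_a,\mu^*_b)}{d^*(a,b)}.$$ Moreover, if $a,b\notin\{x,y\}$ and there exists a coupling $\pi^*$ attaining the minimum in $W_1^{d^*}(\mu^*_a,\mu^*_b)$, then $$k^*(a,b)-k(a,b)\le \frac{\|d-d^*\|_{\infty,N}}{d^*(a,b)},\qquad\text{where }\ \|d-d^*\|_{\infty,N}=\max_{(u,v)\in N^2}|d(u,v)-d^*(u,v)|.$$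
   Context: The graph $G$ is assumed connected, so all hop distances are finite. The hop distance $d(u,v)$ in a graph is the minimum number of edges on a path from $u$ to $v$ (weights are ignored). For a node $a$, $N_a$ denotes its set of neighbors in $G$ and $N^*_a$ its set of neighbors in $G^*$. The neighbor measures are the probability measures on $N$ given by $\mu_a(v)=\frac{w_{a,v}}{\sum_{c\in N_a} w_{a,c}}$ for $v\in N_a$ (and $0$ otherwise), and $\mu^*_a(v)=\frac{w^*_{a,v}}{\sum_{c\in N^*_a} w^*_{a,c}}$ for $v\in N^*_a$ (and $0$ otherwise). For a metric $\delta$ on $N$ and probability measures $\mu,\nu$ on $N$, the Wasserstein distance is $W_1^{\delta}(\mu,\nu)=\inf_{\gamma}\sum_{i,j\in N}\delta(i,j)\gamma_{i,j}$, the infimum over couplings $\gamma$ (nonnegative matrices with row marginals $\mu$ and column marginals $\nu$). The Ollivier-Ricci curvature of a pair $a\neq b$ is $k(a,b)=1-\frac{W_1^{d}(\mu_a,\mu_b)}{d(a,b)}$ in $G$ and $k^*(a,b)=1-\frac{W_1^{d^*}(\mu^*_a,\mu^*_b)}{d^*(a,b)}$ in $G^*$. *)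

(* Defs.v *)
From mathcomp Require Import all_boot all_order all_algebra.
From mathcomp Require Import boolp classical_sets reals.
Set Implicit Arguments. Unset Strict Implicit. Unset Printing Implicit Defensive.
Import Order.TTheory GRing.Theory Num.Theory.
Local Open Scope ring_scope.
Local Open Scope classical_set_scope.

Section Defs.
Variable T : finType.

Definition simple_graph (e : rel T) : Prop :=
  irreflexive e /\ symmetric e.

Fixpoint walk (e : rel T) (n : nat) (u v : T) : bool :=
  match n with
  | 0 => u == v
  | n'.+1 => [exists w, e u w && walk e n' w v]
  end.

(* hop distance: the least n with a walk of n edges from u to v.  In a
   connected graph a shortest path has fewer than #|T| edges, so searching
   n in 0 .. #|T|-1 gives the true minimum. *)
Definition hop (e : rel T) (u v : T) : nat :=
  find (fun n => walk e n u v) (iota 0 #|T|).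

Definition add_edge (e : rel T) (x y : T) : rel T :=
  fun u v => [|| e u v, (u == x) && (v == y) | (u == y) && (v == x)].

Variable R : realType.

Definition add_weight (w : T -> T -> R) (x y : T) (wxy : R) : T -> T -> R :=
  fun u v => if ((u == x) && (v == y)) || ((u == y) && (v == x)) then wxy
             else w u v.

Definition nbr_measure (e : rel T) (w : T -> T -> R) (a : T) : T -> R :=
  fun v => if e a v then w a v / (\sum_(c | e a c) w a c) else 0.

Definition coupling (gamma : T -> T -> R) (mu nu : T -> R) : Prop :=
  (forall i j, 0 <= gamma i j) /\
  (forall i, \sum_j gamma i j = mu i) /\
  (forall j, \sum_i gamma i j = nu j).

Definition cost (delta : T -> T -> R) (gamma : T -> T -> R) : R :=
  \sum_i \sum_j delta i j * gamma i j.

Definition W1 (delta : T -> T -> R) (mu nu : T -> R) : R :=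
  inf [set c | exists gamma, coupling gamma mu nu /\ c = cost delta gamma].

Definition hopR (e : rel T) : T -> T -> R := fun u v => (hop e u v)%:R.

Definition ollivier (e : rel T) (w : T -> T -> R) (a b : T) : R :=
  1 - W1 (hopR e) (nbr_measure e w a) (nbr_measure e w b) / hopR e a b.

Definition dist_sup (e e' : rel T) : R :=
  \big[Num.max/0]_(p : T * T) `|hopR e p.1 p.2 - hopR e' p.1 p.2|.

End Defs.
Arguments hopR {T R} e u v.
Arguments dist_sup {T R} e e'.

(* Main.v *)
Require Import Defs.
From mathcomp Require Import all_boot all_order all_algebra.
From mathcomp Require Import boolp classical_sets reals.
From mathcomp Require Import lra.
Import Order.TTheory GRing.Theory Num.Theory.
Local Open Scope ring_scope.
Local Open Scope classical_set_scope.

Section Aux.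
Variable R : realType.
Variable T : finType.

Lemma W1_ge0 (delta : T -> T -> R) mu nu :
  (forall i j, 0 <= delta i j) -> 0 <= W1 delta mu nu.
Proof.
move=> d0; rewrite /W1.
set S := (X in inf X).
have [[c Sc]|ne] := pselect (exists c, S c).
  apply: lb_le_inf; first by exists c.
  move=> z [g [[g0 _] ->]].
  by apply: sumr_ge0 => i _; apply: sumr_ge0 => j _; apply: mulr_ge0.
have -> : S = set0.
  by rewrite predeqE => z; split => // Sz; apply: ne; exists z.
by rewrite inf0.
Qed.

Lemma W1_le_cost (delta : T -> T -> R) mu nu g :
  (forall i j, 0 <= delta i j) -> coupling g mu nu -> W1 delta mu nu <= cost delta g.
Proof.
move=> d0 cg; rewrite /W1.
apply: ge_inf; last by exists g.
exists 0 => z [g' [[g0 _] ->]].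
by apply: sumr_ge0 => i _; apply: sumr_ge0 => j _; apply: mulr_ge0.
Qed.

Lemma walk_mono (e e' : rel T) n u v :
  (forall a b, e a b -> e' a b) -> walk e n u v -> walk e' n u v.
Proof.
move=> ee'; elim: n u => [|n IH] u //=.
move/existsP=> [z /andP [euz wz]]; apply/existsP; exists z.
by rewrite ee' // IH.
Qed.

Lemma find_mono (X : Type) (p q : pred X) s :
  (forall x, p x -> q x) -> (find q s <= find p s)%N.
Proof.
move=> pq; elim: s => [|z s IH] //=.
case pz: (p z); first by rewrite pq.
by case: (q z).
Qed.

Lemma hop_mono (e e' : rel T) u v :
  (forall a b, e a b -> e' a b) -> (hop e' u v <= hop e u v)%N.
Proof. by move=> ee'; apply: find_mono => n; apply: walk_mono. Qed.

Lemma hop_ge1 (e : rel T) u v : u != v -> (1 <= hop e u v)%N.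
Proof.
move=> uv; rewrite /hop.
have: (0 < #|T|)%N by apply/card_gt0P; exists u.
case: #|T| => [//|n] _ /=.
by rewrite (negbTE uv).
Qed.

Lemma sum_nbr_le1 (e : rel T) (w : T -> T -> R) a :
  (forall u v, e u v -> 0 < w u v) -> \sum_v nbr_measure e w a v <= 1.
Proof.
move=> wpos; rewrite /nbr_measure -big_mkcond /= -mulr_suml.
set S := \sum_(c | e a c) w a c.
have [->|S0] := eqVneq S 0; first by rewrite mul0r.
by rewrite divff.
Qed.

End Aux.

Theorem proposition1 (R : realType) (T : finType) (e : rel T) (w : T -> T -> R)
  (x y : T) (wxy : R) :
  simple_graph e ->
  (forall u v, connect e u v) ->
  (forall u v, e u v -> 0 < w u v) ->
  (forall u v, w u v = w v u) ->
  x != y -> ~~ e x y -> 0 < wxy ->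
  let es := add_edge e x y in
  let ws := add_weight w x y wxy in
  forall a b : T, a != b ->
    (ollivier es ws a b - ollivier e w a b
       <= (W1 (hopR e) (nbr_measure e w a) (nbr_measure e w b)
           - W1 (hopR es) (nbr_measure es ws a) (nbr_measure es ws b))
          / hopR es a b)
    /\
    ((a \notin [:: x; y]) -> (b \notin [:: x; y]) ->
     (exists pi, coupling pi (nbr_measure es ws a) (nbr_measure es ws b) /\
        cost (hopR es) pi = W1 (hopR es) (nbr_measure es ws a) (nbr_measure es ws b)) ->
     ollivier es ws a b - ollivier e w a b <= dist_sup e es / hopR es a b).
Proof.
move=> _ _ wpos _ _ _ _ es ws a b ab.
have ees : forall u v, e u v -> es u v by move=> u v euv; rewrite /es /add_edge euv.
have hle : forall u v : T, (hopR es u v : R) <= hopR e u v.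
  by move=> p q; rewrite /hopR ler_nat; apply: hop_mono.
have hpos : forall u v, u != v -> 0 < (hopR es u v : R).
  by move=> u v uv; rewrite /hopR ltr0n; apply: hop_ge1.
have hge0 : forall (f : rel T) u v, 0 <= (hopR f u v : R) by move=> f u v; rewrite /hopR ler0n.
set W := W1 (hopR e) _ _.
set Ws := W1 (hopR es) _ _.
have W0 : 0 <= W by apply: W1_ge0.
have dpos := hpos a b ab.
have dpos' : 0 < (hopR e a b : R) by apply: lt_le_trans dpos (hle a b).
have part1 : ollivier es ws a b - ollivier e w a b <= (W - Ws) / hopR es a b.
  rewrite /ollivier -/W -/Ws mulrBl.
  have key : W / hopR e a b <= W / hopR es a b.
    by rewrite ler_wpM2l // lef_pV2 ?hle // posrE.
  lra.
split => // anxy bnxy [pi [cpi costpi]].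
apply: le_trans part1 _.
apply: ler_wpM2r; first by rewrite invr_ge0 ltW.
have mua : forall c, c \notin [:: x; y] -> nbr_measure es ws c = nbr_measure e w c.
  move=> c; rewrite !inE negb_or => /andP [cx cy].
  apply/funext => v; rewrite /nbr_measure /es /ws /add_edge /add_weight.
  rewrite (negbTE cx) (negbTE cy) /= orbF.
  congr (if _ then _ / _ else _).
  by apply: eq_bigl => z; rewrite orbF.
rewrite (mua a anxy) (mua b bnxy) in cpi.
have Wle : W <= cost (hopR e) pi by apply: W1_le_cost.
rewrite -costpi.
apply: (le_trans (y := cost (hopR e) pi - cost (hopR es) pi)); first by rewrite lerD2r.
rewrite /cost -sumrB.
have [pi0 [pirow _]] := cpi.
set D := dist_sup e es.
have Dge : forall u v, hopR e u v - hopR es u v <= D.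
  move=> u v; apply: le_trans (ler_norm _) _.
  rewrite /D /dist_sup.
  exact: (le_bigmax 0 (fun p : T * T => `|hopR e p.1 p.2 - hopR es p.1 p.2|) (u, v)).
have D0 : 0 <= D.
  apply: le_trans (normr_ge0 (hopR e a a - hopR es a a : R)) _.
  exact: (le_bigmax 0 (fun p : T * T => `|hopR e p.1 p.2 - hopR es p.1 p.2|) (a, a)).
apply: (le_trans (y := \sum_i D * nbr_measure e w a i)).
  apply: ler_sum => i _; rewrite -sumrB -pirow mulr_sumr.
  apply: ler_sum => j _; rewrite -mulrBl.
  by apply: ler_wpM2r => //.
rewrite -mulr_sumr -[X in _ <= X]mulr1.
by apply: ler_wpM2l => //; apply: sum_nbr_le1.
Qed.
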